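(* Let $r\ge 3$ and $1\le t\le r-2$ be integers. Let $\mathcal F\subseteq X_1\times\dots\times X_r$ be a non-trivial $t$-intersecting family that is $\ell$-shift-resistant for some $\ell\in[r]$. Then $|\bigcap\mathcal F|=t-1$, and there exists $x\in X_\ell\setminus\{1\}$ such that: $N_{\mathcal F}(x,\ell)\ne\emptyset$; $N_{\mathcal F}(1,\ell)\ne\emptyset$; for every $A\in N_{\mathcal F}(x,\ell)$, the sequence obtained from $A$ by replacing its $\ell$-th coordinate by $1$ does not belong to $\mathcal F$; and $N_{\mathcal F}(y,\ell)=\emptyset$ for every $y\in X_\ell\setminus\{1,x\}$.
   Context: Let $X_\ell=[n_\ell]$ for $1\le \ell\le r$, with $n_\ell\ge2$. For $A,B\in X_1\times\dots\times X_r$, write $A\cap B=\{\ell:A[\ell]=B[\ell]\}$ ($A[\ell]$ the $\ell$-th coordinate). $\mathcal F$ is $t$-intersecting if $|A\cap B|\ge t$ for all $A,B\in\mathcal F$; $\bigcap\mathcal F$ is the set of coordinates $\ell$ on which all members of $\mathcal F$ agree; a $t$-intersecting $\mathcal F$ is non-trivial if $|\bigcap\mathcal F|<t$ and trivial otherwise. For $1\le\ell\le r$ and $1<j\le n_\ell$, the shift $S^{(\ell)}_j$ acts on $F\in\mathcal F$ by: if $F[\ell]=j$ and the sequence $F'$ obtained from $F$ by replacing its $\ell$-th coordinate by $1$ is not in $\mathcal F$, then $S^{(\ell)}_j(F)=F'$; otherwise $S^{(\ell)}_j(F)=F$; and $S^{(\ell)}_j(\mathcal F)=\{S^{(\ell)}_j(F):F\in\mathcal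 F\}$. A non-trivial $t$-intersecting family $\mathcal F$ is $\ell$-shift-resistant if there exists $x\in X_\ell\setminus\{1\}$ such that $|\bigcap S^{(\ell)}_x(\mathcal F)|=t$. For $x\in X_\ell$, $N_{\mathcal F}(x,\ell)=\{A\in\mathcal F:A[\ell]=x\}$. *)

(* Defs.v *)
From HB Require Import structures.
From mathcomp Require Import all_boot all_order.
From mathcomp Require Import finmap.
Set Implicit Arguments. Unset Strict Implicit. Unset Printing Implicit Defensive.
Local Open Scope fset_scope.

(* A sequence A in X_1 x ... x X_r is a function 'I_r -> nat, whose value at
   coordinate l (0-based index for the paper's l+1) lies in [n_l] = {1..n_l}. *)
Definition sq (r : nat) := {ffun 'I_r -> nat}.

Definition in_prod (r : nat) (n : 'I_r -> nat) (A : sq r) : Prop :=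
  forall i : 'I_r, 1 <= A i <= n i.

Definition agree (r : nat) (A B : sq r) : {set 'I_r} := [set l | A l == B l].

Definition t_intersecting (r t : nat) (F : {fset sq r}) : Prop :=
  forall A B, A \in F -> B \in F -> t <= #|agree A B|.

Definition bigcapF (r : nat) (F : {fset sq r}) : {set 'I_r} :=
  [set l | [forall A : F, forall B : F, (val A) l == (val B) l]].

Definition nontrivial (r t : nat) (F : {fset sq r}) : Prop :=
  t_intersecting t F /\ #|bigcapF F| < t.

Definition repl (r : nat) (A : sq r) (l : 'I_r) (v : nat) : sq r :=
  [ffun i => if i == l then v else A i].

Definition shift_elt (r : nat) (l : 'I_r) (j : nat) (F : {fset sq r}) (A : sq r)
  : sq r :=
  if (A l == j) && (repl A l 1 \notin F) then repl A l 1 else A.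

Definition shift (r : nat) (l : 'I_r) (j : nat) (F : {fset sq r}) : {fset sq r} :=
  [fset shift_elt l j F A | A in F].

Definition shift_resistant (r t : nat) (n : 'I_r -> nat) (l : 'I_r)
  (F : {fset sq r}) : Prop :=
  nontrivial t F /\ exists x, 1 < x <= n l /\ #|bigcapF (shift l x F)| = t.

Definition nbhd (r : nat) (F : {fset sq r}) (x : nat) (l : 'I_r) : {fset sq r} :=
  [fset A in F | A l == x].

(* Main.v *)
Require Import Defs.
From HB Require Import structures.
From mathcomp Require Import all_boot all_order.
From mathcomp Require Import finmap zify.
Local Open Scope fset_scope.

Lemma bigcapP r (F : {fset sq r}) i :
  reflect (forall A B, A \in F -> B \in F -> A i = B i) (i \in bigcapF F).
Proof.
rewrite /bigcapF inE; apply: (iffP forallP) => H.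
- move=> A B HA HB; move: (H [`HA]) => /forallP /(_ [`HB]) /eqP; done.
- move=> A; apply/forallP => B; apply/eqP; apply: H; exact: fsvalP.
Qed.

Lemma nbhdE r (F : {fset sq r}) x l A :
  (A \in nbhd F x l) = (A \in F) && (A l == x).
Proof. by rewrite /nbhd !inE. Qed.

Lemma shift_off r (l : 'I_r) j F A i : i != l -> shift_elt l j F A i = A i.
Proof.
move=> Hi; rewrite /shift_elt; case: ifP => // _.
by rewrite /repl ffunE (negbTE Hi).
Qed.

Lemma shift_mem r (l : 'I_r) j F A : A \in F -> shift_elt l j F A \in shift l j F.
Proof. by move=> HA; rewrite /shift; apply/imfsetP; exists A. Qed.

Lemma shiftP r (l : 'I_r) j F B :
  B \in shift l j F -> exists2 A, A \in F & B = shift_elt l j F A.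
Proof. by move=> /imfsetP [A HA ->]; exists A. Qed.

Lemma bigcap_off r (l : 'I_r) j F i : i != l ->
  (i \in bigcapF (shift l j F)) = (i \in bigcapF F).
Proof.
move=> Hi; apply/bigcapP/bigcapP => H.
- move=> A B HA HB; rewrite -(@shift_off _ l j F A i Hi) -(@shift_off _ l j F B i Hi).
  by apply: H; apply: shift_mem.
- move=> A' B' /shiftP [A HA ->] /shiftP [B HB ->].
  rewrite !shift_off //; exact: H.
Qed.

Lemma shift_l r (l : 'I_r) j F A :
  shift_elt l j F A l = if (A l == j) && (repl A l 1 \notin F) then 1 else A l.
Proof. by rewrite /shift_elt; case: ifP => //; rewrite /repl ffunE eqxx. Qed.

Theorem lemma2p2 (r t : nat) (n : 'I_r -> nat) (F : {fset sq r}) (l : 'I_r) :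
  3 <= r -> 1 <= t -> t <= r - 2 ->
  (forall i : 'I_r, 2 <= n i) ->
  (forall A, A \in F -> in_prod n A) ->
  t_intersecting t F -> nontrivial t F ->
  shift_resistant t n l F ->
  #|bigcapF F| = t - 1 /\
  exists x : nat, 1 < x <= n l /\
    nbhd F x l != fset0 /\
    nbhd F 1 l != fset0 /\
    (forall A, A \in nbhd F x l -> repl A l 1 \notin F) /\
    (forall y : nat, 1 <= y <= n l -> y != 1 -> y != x -> nbhd F y l = fset0).
Proof.
move=> Hr Ht Htr _ _ _ [_ Hlt] [_ [x [Hx Hcard]]].
set S := shift l x F in Hcard.
have sub1 : l \in bigcapF F -> bigcapF S \subset bigcapF F.
  move=> HlF; apply/subsetP => i Hi; case: (eqVneq i l) => [->//|ne].
  by move: Hi; rewrite /S (@bigcap_off _ l x F i ne).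
have HlF : l \notin bigcapF F.
  apply/negP => HlF; move: (subset_leq_card (sub1 HlF)); rewrite Hcard.
  by move: Hlt; rewrite ltnNge => /negbTE ->.
have HlS : l \in bigcapF S.
  apply/negPn/negP => HlS.
  have : bigcapF S \subset bigcapF F.
    apply/subsetP => i Hi; case: (eqVneq i l) => [e|ne].
      by move: Hi; rewrite e (negbTE HlS).
    by move: Hi; rewrite /S (@bigcap_off _ l x F i ne).
  move/subset_leq_card; rewrite Hcard.
  by move: Hlt; rewrite ltnNge => /negbTE ->.
have sub2 : bigcapF S \subset l |: bigcapF F.
  apply/subsetP => i Hi; rewrite in_setU1; case: (eqVneq i l) => //= ne.
  by move: Hi; rewrite /S (@bigcap_off _ l x F i ne).
split.
  move: (subset_leq_card sub2); rewrite cardsU1 HlF Hcard /= => H1.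
  move: Hlt H1; set a := #|_|; move=> h1 h2. lia.
have key : forall C, C \in F -> C l = 1 \/ (C l = x /\ repl C l 1 \notin F).
  move: HlF; rewrite /bigcapF inE => /forallPn [A' /forallPn [B' HAB]].
  case: A' HAB => A HA; case: B' => B HB /= HAB.
  have E : forall C, C \in F -> shift_elt l x F C l = shift_elt l x F A l.
    move=> C HC; move/bigcapP: HlS; apply; exact: shift_mem.
  have c1 : shift_elt l x F A l = 1.
    move: (E B HB); rewrite !shift_l.
    case: ifP => HcB; case: ifP => HcA //; try by move=> ->.
    by move=> e; rewrite e eqxx in HAB.
  move=> C HC; move: (E C HC); rewrite c1 shift_l.
  case: ifP => [/andP [/eqP -> ->] _|_ ->]; [by right|by left].
move: HlF; rewrite /bigcapF inE => /forallPn [A' /forallPn [B' HAB]].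
case: A' HAB => A HA; case: B' => B HB /= HAB.
have x1 : x != 1 by case/andP: Hx => /gtn_eqF ->.
have [Cx [C1 [HCx HC1 eCx eC1]]] : exists Cx C1, [/\ Cx \in F, C1 \in F, Cx l = x & C1 l = 1].
  case: (key A HA) => [eA|[eA _]]; case: (key B HB) => [eB|[eB _]];
    rewrite eA eB ?eqxx // in HAB.
  - by exists B, A.
  - by exists A, B.
exists x; split => //; split.
  by apply/fset0Pn; exists Cx; rewrite nbhdE HCx eCx eqxx.
split.
  by apply/fset0Pn; exists C1; rewrite nbhdE HC1 eC1 eqxx.
split.
  move=> C; rewrite nbhdE => /andP [HC /eqP eC].
  by case: (key C HC) => [e|[_ //]]; rewrite e in eC; rewrite eC eqxx in x1.
move=> y _ y1 yx; apply/fsetP => C; rewrite nbhdE inE.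
apply/negbTE/negP => /andP [HC /eqP eC].
case: (key C HC) => [e|[e _]]; [by rewrite -eC e eqxx in y1 | by rewrite -eC e eqxx in yx].
Qed.
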